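(* Let $n\ge 2$ and let $\Delta=\{(p_1,\ldots,p_n)\in\mathbb{R}^n : \sum_{i=1}^n p_i=1,\ p_i\ge 0\ \forall i\}$ be the probability simplex, with $\mathbf{e}_j$ ($j=1,\ldots,n$) the standard basis vectors (the point-mass PMFs). Let $\mathbf{p},\mathbf{p}'\in\Delta$. Then there exist $\mathbf{q}=(q_1,\ldots,q_n)\in\Delta$ and an index set $J\subset\{1,\ldots,n\}$ with $|J|=n-1$, $J=\{j_1,\ldots,j_{n-1}\}$, such that $$\mathbf{p}'=q_1\mathbf{p}+\sum_{i=1}^{n-1}q_{i+1}\mathbf{e}_{j_i}.$$ Moreover, if $\mathbf{p}'$ is an interior point of $\Delta$ (all entries strictly positive), then $q_1>0$. *)

(* Defs.v *)
(* Points of R^n are functions 'I_n -> R (coordinates indexed 0..n-1). *)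
From mathcomp Require Import all_boot all_order all_algebra.
Set Implicit Arguments. Unset Strict Implicit. Unset Printing Implicit Defensive.
Import Order.TTheory GRing.Theory Num.Theory.
Local Open Scope ring_scope.

Definition in_simplex (R : realFieldType) (n : nat) (p : 'I_n -> R) : Prop :=
  (\sum_(i < n) p i = 1) /\ (forall i, 0 <= p i).

Definition e_basis (R : realFieldType) (n : nat) (j : 'I_n) : 'I_n -> R :=
  fun k => (k == j)%:R.

Lemma succ_ord_proof (n : nat) (i : 'I_n.-1) : (i.+1 < n)%N.
Proof. by case: n i => [[]|n] //= i; rewrite ltnS. Qed.

Definition succ_ord (n : nat) (i : 'I_n.-1) : 'I_n := Ordinal (succ_ord_proof i).

(* Main.v *)
Require Import Defs.
From mathcomp Require Import all_boot all_order all_algebra.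
From mathcomp Require Import ring lra.
Import Order.TTheory GRing.Theory Num.Theory.
Local Open Scope ring_scope.

Theorem lemma1 (R : realFieldType) (n : nat) (hn : (2 <= n)%N)
    (p p' : 'I_n -> R) :
  in_simplex p -> in_simplex p' ->
  exists (q : 'I_n -> R) (j : 'I_n.-1 -> 'I_n),
    [/\ in_simplex q, injective j,
        (forall k, p' k = q (@Ordinal n 0 (ltnW hn)) * p k
                          + \sum_(i < n.-1) q (succ_ord i) * @e_basis R n (j i) k)
      & ((forall k, 0 < p' k) -> 0 < q (@Ordinal n 0 (ltnW hn)))].
Proof.
move=> [sp hp] [sp' hp'].
case: n hn p p' sp hp sp' hp' => [|[|n]] // hn p p' sp hp sp' hp'.
have [k0 pk0] : exists k, 0 < p k.
  case: (pickP (fun k => 0 < p k)) => [k Hk|H]; first by exists k.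
  exfalso; have : \sum_(k < n.+2) p k = 0.
    apply: big1 => k _; apply/eqP; rewrite eq_le hp andbT leNgt; exact/negbT/H.
  by rewrite sp => /eqP; rewrite oner_eq0.
case: (@arg_minP _ R _ k0 (fun k => 0 < p k) (fun k => p' k / p k) pk0)
  => m pm minm.
set t := p' m / p m.
have t0 : 0 <= t by rewrite divr_ge0 // ltW.
have tpm : t * p m = p' m by rewrite /t divfK // gt_eqF.
have le_tp : forall k, t * p k <= p' k.
  move=> k; have [pk|] := ltP 0 (p k).
    by rewrite -ler_pdivlMr // minm.
  move=> pk; have -> : p k = 0 by apply/eqP; rewrite eq_le pk hp.
  by rewrite mulr0.
pose j : 'I_n.+1 -> 'I_n.+2 := @lift n.+2 m.
pose q := fun k : 'I_n.+2 => if val k == 0%N then t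
   else p' (j (inord (val k).-1)) - t * p (j (inord (val k).-1)).
have qS : forall i : 'I_n.+1, q (@succ_ord n.+2 i) = p' (j i) - t * p (j i).
  by move=> i; rewrite /q /= inord_val.
exists q, j; split.
- split.
  + rewrite big_ord_recl.
    have -> : \sum_(i < n.+1) q (lift ord0 i) = \sum_(i < n.+1) (p' (j i) - t * p (j i)).
      by apply: eq_bigr => i _; rewrite -qS; congr q; apply: val_inj.
    rewrite sumrB -mulr_sumr.
    move: sp sp'; rewrite (bigD1_ord m) // (bigD1_ord m (P := xpredT)) //.
    move=> sp sp'.
    have e1 : \sum_(i < n.+1) p' (lift m i) = 1 - p' m by rewrite -sp' addrC addKr.
    have e2 : \sum_(i < n.+1) p (lift m i) = 1 - p m by rewrite -sp addrC addKr.
    rewrite /j e1 e2 /q /= mulrBr tpm mulr1; lra.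
  + move=> k; rewrite /q; case: ifP => _ //.
    by rewrite subr_ge0.
- exact: lift_inj.
- move=> k; rewrite [q _]/q /=.
  case: (unliftP m k) => [i0 ->|->].
  + rewrite (bigD1 i0) //= big1 ?addr0.
      by rewrite /e_basis eqxx mulr1 qS /j; ring.
    move=> i ne; rewrite /e_basis (inj_eq (@lift_inj _ m)) eq_sym (negbTE ne).
    by rewrite mulr0.
  + rewrite big1 ?addr0 // => i _.
    rewrite /e_basis /j eq_sym; have -> : (lift m i == m) = false by apply/negbTE; rewrite eq_sym; exact: neq_lift.
    by rewrite mulr0.
- move=> H; rewrite /q /= divr_gt0 //.
Qed.
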